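(* As formal power series in $z$ with coefficients polynomials in $t$, \[ F(t,z)=\sum_{n\ge 0}\sum_{w\in S_n} t^{\operatorname{dep}(w)} z^n = \cfrac{1}{1 - z - \cfrac{tz^2}{1 - 3tz - \cfrac{4t^3 z^2}{1 - 5t^2 z - \cfrac{9t^5 z^2}{1 - 7t^3 z - \cdots}}}}, \] i.e. the $J$-fraction whose $i$-th level ($i\ge 0$) has denominator term $1-(2i+1)t^i z$ and whose numerator linking level $i-1$ to level $i$ ($i\ge1$) is $i^2 t^{2i-1} z^2$.
   Context: $S_0$ consists of the single empty permutation, of depth $0$. For $w\in S_n$, the depth is $\operatorname{dep}(w)=\sum_{i:\,w(i)>i}(w(i)-i)$, i.e. half the total displacement $\sum_{i=1}^n |w(i)-i|$. *)

(* Defs.v *)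
From HB Require Import structures.
From mathcomp Require Import all_boot all_order all_algebra all_fingroup.
Set Implicit Arguments. Unset Strict Implicit. Unset Printing Implicit Defensive.
Import GRing.Theory.
Local Open Scope ring_scope.

(* Depth of a permutation w of {0,...,n-1} (0-based indices; equivalent to the
   1-based definition): sum over i with w(i) > i of (w(i) - i).  Truncated nat
   subtraction makes the terms with w(i) <= i vanish. *)
Definition dep (n : nat) (w : 'S_n) : nat := (\sum_(i < n) (w i - i))%N.

Definition ps := nat -> {poly int}.

(* Coefficients of the multiplicative inverse of a series f with f 0 = 1:
   g_0 = 1, g_(m+1) = - sum_(j=1..m+1) f_j g_(m+1-j). *)
Fixpoint ps_inv_seq (f : ps) (n : nat) : seq {poly int} :=
  match n with
  | O => [:: 1]
  | m.+1 => let s := ps_inv_seq f m in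
            rcons s (- \sum_(k < m.+1) f k.+1 * nth 0 s (m - k)%N)
  end.

Definition ps_inv (f : ps) : ps := fun n => nth 0 (ps_inv_seq f n) n.

(* J-fraction coefficients: level i has denominator term 1 - b_i z, with
   b_i = (2i+1) t^i; the numerator linking level i-1 to level i (i >= 1) is
   a_i z^2 with a_i = i^2 t^(2i-1). *)
Definition jb (i : nat) : {poly int} := (2 * i + 1)%:R *: 'X^i.
Definition ja (i : nat) : {poly int} := (i ^ 2)%:R *: 'X^(2 * i - 1).

(* jtail d i = the finite J-fraction starting at level i and using levels
   i, i+1, ..., i+d (the last level is 1/(1 - b_(i+d) z)). *)
Fixpoint jtail (d i : nat) : ps :=
  match d with
  | O => ps_inv (fun n => if n == 0%N then 1 else if n == 1%N then - jb i else 0)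
  | d'.+1 =>
      let T := jtail d' i.+1 in
      ps_inv (fun n => match n with
                       | O => 1
                       | 1 => - jb i
                       | m.+2 => - (ja i.+1 * T m)
                       end)
  end.

Definition jconv (N : nat) : ps := jtail N 0.

(* Main.v *)
Require Import Defs.
From mathcomp Require Import all_boot all_order all_algebra all_fingroup.
From mathcomp Require Import zify ring.
Set Implicit Arguments. Unset Strict Implicit. Unset Printing Implicit Defensive.
Import GRing.Theory.
Local Open Scope ring_scope.

Lemma size_pis (f : ps) n : size (ps_inv_seq f n) = n.+1.
Proof. by elim: n => //= n IH; rewrite size_rcons IH. Qed.

Lemma nth_pis (f : ps) n i : (i <= n)%N -> nth 0 (ps_inv_seq f n) i = ps_inv f i.
Proof.
elim: n => [|n IH]; first by rewrite leqn0 => /eqP->.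
rewrite leq_eqVlt => /orP[/eqP->//|Hi].
by rewrite /= nth_rcons size_pis Hi IH.
Qed.

Lemma ps_inv0 (f : ps) : ps_inv f 0 = 1.
Proof. by []. Qed.

Lemma ps_invS (f : ps) m :
  ps_inv f m.+1 = - \sum_(k < m.+1) f k.+1 * ps_inv f (m - k)%N.
Proof.
rewrite /ps_inv /= nth_rcons size_pis ltnn eqxx; congr (- _).
by apply: eq_bigr => k _; rewrite nth_pis // leq_subr.
Qed.

Definition dd (h : nat) : {poly int} := (h ^ 2)%:R *: 'X^(h.-1).

Fixpoint Xc (L f m h : nat) : {poly int} :=
  match m with
  | O => (h == f)%:R
  | m'.+1 => jb h * Xc L f m' h
             + (if (h < L)%N then 'X^(h.+1) * Xc L f m' h.+1 else 0)
             + (if (f < h)%N then dd h * Xc L f m' h.-1 else 0)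
  end.

Lemma FR L f m h : (f < h <= L)%N ->
  Xc L f m h = \sum_(j < m) Xc L f.+1 j h * dd f.+1 * Xc L f (m.-1 - j) f.
Proof.
elim: m h => [|m IH] h /andP[fh hL].
  by rewrite big_ord0 /= (gtn_eqF fh).
rewrite big_ord_recl /= subn0.
rewrite [X in _ = _ + X](eq_bigr (fun j : 'I_m =>
   jb h * (Xc L f.+1 j h * dd f.+1 * Xc L f (m.-1 - j) f)
   + (if (h < L)%N then 'X^(h.+1) * (Xc L f.+1 j h.+1 * dd f.+1 * Xc L f (m.-1 - j) f) else 0)
   + (if (f.+1 < h)%N then dd h * (Xc L f.+1 j h.-1 * dd f.+1 * Xc L f (m.-1 - j) f) else 0))); last first.
  move=> j _; rewrite /bump /= add1n add0n.
  have -> : (m - j.+1)%N = (m.-1 - j)%N by lia.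
  case: (h < L)%N; case: (f.+1 < h)%N; rewrite ?mulr0 ?mul0r ?addr0 ?add0r; ring.
rewrite big_split /= big_split /= -mulr_sumr -(IH h) ?fh ?hL //.
have E1 : (if (h < L)%N then 'X^(h.+1) * Xc L f m h.+1 else 0) =
  \sum_(i < m) (if (h < L)%N
        then 'X^(h.+1) * (Xc L f.+1 i h.+1 * dd f.+1 * Xc L f (m.-1 - i) f)
        else 0).
  case: ifP => HL; last by rewrite big1.
  by rewrite -mulr_sumr -(IH h.+1) // (leq_trans fh) //=.
have E2 : dd h * Xc L f m h.-1 =
  (h == f.+1)%:R * dd f.+1 * Xc L f m f +
  \sum_(i < m) (if (f.+1 < h)%N
       then dd h * (Xc L f.+1 i h.-1 * dd f.+1 * Xc L f (m.-1 - i) f)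
       else 0).
  case: (ltngtP h f.+1) => Hh.
  - by move: fh; rewrite ltnNge -ltnS Hh.
  - rewrite -mulr_sumr -(IH h.-1); last by apply/andP; split; lia.
    by rewrite /= mulr0n !mul0r add0r.
  - by rewrite big1_eq Hh /= mulr1n mul1r addr0.
rewrite E1 E2; ring.
Qed.

Lemma ja_dd i : ja i.+1 = 'X^(i.+1) * dd i.+1.
Proof.
rewrite /ja /dd -scalerAr -exprD /=; congr (_ *: 'X^_); lia.
Qed.

Lemma jtailE d i n : jtail d i n = Xc (i + d) i n i.
Proof.
elim: d i n => [|d IHd] i n.
  elim/ltn_ind: n => -[|m] IH; first by rewrite /= eqxx.
  rewrite /= ps_invS big_ord_recl /= addn0 ltnn big1; last by move=> k _; rewrite mul0r.
  rewrite addr0 addr0 addr0 mulNr opprK subn0.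
  by move: (IH m (ltnSn m)); rewrite addn0 /= => ->.
elim/ltn_ind: n => -[|m] IH; first by rewrite /= eqxx.
transitivity (jb i * jtail d.+1 i m +
   \sum_(k < m) ja i.+1 * jtail d i.+1 k * jtail d.+1 i (m.-1 - k)%N).
  rewrite /= ps_invS big_ord_recl /= subn0 mulNr opprD opprK -sumrN.
  congr (_ + _); apply: eq_bigr => k _.
  rewrite mulNr opprK /bump add1n add0n.
  have -> : (m - k.+1)%N = (m.-1 - k)%N by lia.
  by [].
rewrite [RHS]/=; have -> : (i < i + d.+1)%N by lia.
rewrite ltnn addr0.
rewrite IH // (FR _ _ (h := i.+1)); last by apply/andP; split; lia.
rewrite mulr_sumr; congr (_ + _); apply: eq_bigr => k _.
rewrite IHd addSnnS IH; last by lia.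
rewrite ja_dd; ring.
Qed.

Fixpoint Xu (m h : nat) : {poly int} :=
  match m with
  | O => (h == 0%N)%:R
  | m'.+1 => jb h * Xu m' h + 'X^(h.+1) * Xu m' h.+1 + dd h * Xu m' h.-1
  end.

Lemma XcXu L m h : (h + m <= L)%N -> Xc L 0 m h = Xu m h.
Proof.
elim: m h => [|m IH] h hm //=.
rewrite !IH; try lia.
have -> : (h < L)%N by lia.
case: h hm => [|h] hm //=.
by rewrite /dd scale0r mul0r.
Qed.

Section Comb.
Local Notation pm n := ('I_n -> option 'I_n).

Definition cx n (k : nat) (p : pm n) (w : 'S_n) (x : 'I_n) : bool :=
  if p x is Some y then w x == y else (k <= w x)%N.
Definition compat n (k : nat) (p : pm n) (w : 'S_n) : bool :=
  [forall x : 'I_n, (x < k)%N ==> cx k p w x].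
Definition valid n (k : nat) (p : pm n) : Prop :=
  [/\ (forall x : 'I_n, (k <= x)%N -> p x = None),
      (forall (x y : 'I_n), p x = Some y -> (y < k)%N) &
      (forall (x1 x2 y : 'I_n), p x1 = Some y -> p x2 = Some y -> x1 = x2)].
Definition pend n (k : nat) (p : pm n) : {set 'I_n} := [set x : 'I_n | (x < k)%N && (p x == None)].
Definition tgt n (k : nat) (p : pm n) : {set 'I_n} :=
  [set y : 'I_n | (y < k)%N && [forall x, p x != Some y]].
Definition upd n (p : pm n) (a b : 'I_n) : pm n := fun x => if x == a then Some b else p x.

Lemma permE1 n (w : 'S_n) x y : (w x == y) = (x == (w^-1)%g y).
Proof. by apply/eqP/eqP => [<-|->]; rewrite ?permK ?permKV. Qed.

Lemma lt_kk1 n (x kk : 'I_n) : (x < kk.+1)%N -> x != kk -> (x < kk)%N.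
Proof. by rewrite ltnS leq_eqVlt => /orP[/eqP/val_inj->|//]; rewrite eqxx. Qed.

Lemma compatS n (kk : 'I_n) (p' : pm n) (w : 'S_n) :
  compat kk.+1 p' w = cx kk.+1 p' w kk && [forall x : 'I_n, (x < kk)%N ==> cx kk.+1 p' w x].
Proof.
apply/idP/idP.
  move/forallP=> H; rewrite (implyP (H kk)) ?ltnSn //=; apply/forallP => x.
  by apply/implyP => Hx; apply: (implyP (H x)); apply: ltnW.
case/andP=> H1 /forallP H2; apply/forallP => x; apply/implyP => Hx.
case: (x =P kk) => [->//|/eqP Hne].
by apply: (implyP (H2 x)); apply: lt_kk1.
Qed.

Lemma cxS n (kk : 'I_n) (p p' : pm n) (w : 'S_n) (x : 'I_n) : (x < kk)%N -> p' x = p x ->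
  compat kk p w -> cx kk.+1 p' w x = (x \notin pend kk p) || (x != (w^-1)%g kk).
Proof.
move=> Hx Hp /forallP/(_ x); rewrite Hx /= /cx Hp inE Hx /=.
case: (p x) => //= Hle; rewrite -permE1 ltn_neqAle Hle andbT.
by rewrite eq_sym.
Qed.

Lemma forall_notin n (kk : 'I_n) (p : pm n) (w : 'S_n) :
  [forall x : 'I_n, (x < kk)%N ==> ((x \notin pend kk p) || (x != (w^-1)%g kk))]
  = ((w^-1)%g kk \notin pend kk p).
Proof.
apply/forallP/idP => [H|H x].
  apply/negP => Hin; move: (H ((w^-1)%g kk)); rewrite Hin eqxx /=.
  by move: Hin; rewrite inE => /andP[->].
apply/implyP => _; case: (x =P (w^-1)%g kk) => [->|/eqP Hne]; first by rewrite H.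
by apply/orP; right.
Qed.

Lemma forall_same n (kk : 'I_n) (p p' : pm n) (w : 'S_n) :
  (forall x : 'I_n, (x < kk)%N -> p' x = p x) -> compat kk p w ->
  [forall x : 'I_n, (x < kk)%N ==> cx kk.+1 p' w x] = ((w^-1)%g kk \notin pend kk p).
Proof.
move=> Hp C; rewrite -forall_notin; apply: eq_forallb => x.
by case Hx: (x < kk)%N => //=; apply: cxS => //; apply: Hp.
Qed.

Lemma upd_lt n (kk a b x : 'I_n) (p : pm n) : (x < kk)%N -> upd p kk b x = p x.
Proof. by move=> Hx; rewrite /upd; case: eqP => // Heq; rewrite Heq ltnn in Hx. Qed.

Lemma forall_x0 n (kk x0 : 'I_n) (p p' : pm n) (w : 'S_n) :
  x0 \in pend kk p ->
  (forall x : 'I_n, (x < kk)%N -> p' x = upd p x0 kk x) -> compat kk p w ->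
  [forall x : 'I_n, (x < kk)%N ==> cx kk.+1 p' w x] = ((w^-1)%g kk == x0).
Proof.
move=> Hx0 Hp C; have Hx0k : (x0 < kk)%N by move: Hx0; rewrite inE => /andP[].
apply/forallP/eqP => [H|Heq x].
  move: (H x0); rewrite Hx0k /= /cx Hp // /upd eqxx permE1.
  by move/eqP.
apply/implyP => Hx; case: (x =P x0) => [->|/eqP Hne].
  by rewrite /cx Hp // /upd eqxx permE1 Heq.
rewrite (@cxS _ _ p) //; last by rewrite Hp // /upd (negbTE Hne).
by rewrite Heq Hne orbT.
Qed.

Section Chars.
Variables (n : nat) (kk : 'I_n) (p : pm n) (w : 'S_n).
Hypotheses (V : valid kk p) (C : compat kk p w).
Let e := ((w^-1)%g kk \in pend kk p).

Lemma c1 : compat kk.+1 (upd p kk kk) w = (w kk == kk) && ~~ e.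
Proof.
rewrite compatS (@forall_same _ _ p) //; last by move=> x Hx; apply: upd_lt.
by rewrite /cx /upd eqxx.
Qed.

Lemma c2 y : compat kk.+1 (upd p kk y) w = (w kk == y) && ~~ e.
Proof.
rewrite compatS (@forall_same _ _ p) //; last by move=> x Hx; apply: upd_lt.
by rewrite /cx /upd eqxx.
Qed.

Lemma c5 : compat kk.+1 p w = (kk < w kk)%N && ~~ e.
Proof.
rewrite compatS (@forall_same _ _ p) //.
by case: V => V1 _ _; rewrite /cx V1.
Qed.

Lemma c3 x0 : x0 \in pend kk p ->
  compat kk.+1 (upd p x0 kk) w = ((w^-1)%g kk == x0) && (kk < w kk)%N.
Proof.
move=> Hx0; have Hx0k : (x0 < kk)%N by move: Hx0; rewrite inE => /andP[].
rewrite compatS (@forall_x0 _ _ x0 p) // andbC; congr (_ && _).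
case: V => V1 _ _; rewrite /cx /upd; case: eqP => [Heq|_]; last by rewrite V1.
by rewrite Heq ltnn in Hx0k.
Qed.

Lemma c4 x0 y : x0 \in pend kk p ->
  compat kk.+1 (upd (upd p x0 kk) kk y) w = ((w^-1)%g kk == x0) && (w kk == y).
Proof.
move=> Hx0.
rewrite compatS (@forall_x0 _ _ x0 p) //; last by move=> x Hx; apply: upd_lt.
by rewrite andbC /cx /upd eqxx.
Qed.

End Chars.

Lemma valid_mono n k (p : pm n) : valid k p -> valid k.+1 p.
Proof.
case=> V1 V2 V3; split => //.
  by move=> x Hx; apply: V1; apply: ltnW.
by move=> x y /V2 /ltnW.
Qed.

Lemma valid_upd n c (p : pm n) (a b : 'I_n) : valid c p -> (a < c)%N -> (b < c)%N ->
  p a = None -> (forall x, p x != Some b) -> valid c (upd p a b).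
Proof.
case=> V1 V2 V3 ha hb pa pb; split.
- move=> x Hx; rewrite /upd; case: eqP => [Hxa|_]; last exact: V1.
  by rewrite Hxa in Hx; move: (leq_trans ha Hx); rewrite ltnn.
- by move=> x y; rewrite /upd; case: eqP => [_ [<-]//|_ /V2].
- move=> x1 x2 y; rewrite /upd; case: eqP => [->|_]; case: eqP => [->|_] //.
  + by move=> [<-] H; move: (pb x2); rewrite H eqxx.
  + by move=> H [Hy]; move: (pb x1); rewrite H Hy eqxx.
  + exact: V3.
Qed.

Lemma ltS_ne n (x kk : 'I_n) : x != kk -> (x < kk.+1)%N = (x < kk)%N.
Proof.
move=> Hne; rewrite ltnS leq_eqVlt; case: eqP => //= Heq.
by move: Hne; rewrite (val_inj Heq) eqxx.
Qed.

Lemma kk_notin n (kk : 'I_n) (p : pm n) : kk \notin pend kk p.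
Proof. by rewrite inE ltnn. Qed.

Lemma pend1 n (kk b : 'I_n) (p : pm n) : pend kk.+1 (upd p kk b) = pend kk p.
Proof.
apply/setP => x; rewrite !inE /upd; case: (x =P kk) => [->|/eqP Hne] /=.
  by rewrite ltnn andbC.
by rewrite ltS_ne.
Qed.

Lemma pend3 n (kk x0 : 'I_n) (p : pm n) : valid kk p -> x0 \in pend kk p ->
  pend kk.+1 (upd p x0 kk) = kk |: (pend kk p :\ x0).
Proof.
case=> V1 _ _ Hx0; apply/setP => x; rewrite !inE /upd.
case: (x =P kk) => [->|/eqP Hne] /=.
  have Hx0k : (x0 < kk)%N by move: Hx0; rewrite inE => /andP[].
  rewrite ltnSn (_ : (kk == x0) = false) ?V1 //.
  by apply/eqP => E; rewrite E ltnn in Hx0k.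
rewrite ltS_ne //; case: (x =P x0) => [->|/eqP Hn] /=.
  by rewrite andbC.
by [].
Qed.

Lemma pend4 n (kk x0 y : 'I_n) (p : pm n) : x0 \in pend kk p ->
  pend kk.+1 (upd (upd p x0 kk) kk y) = pend kk p :\ x0.
Proof.
move=> Hx0; apply/setP => x; rewrite !inE /upd.
case: (x =P kk) => [->|/eqP Hne] /=.
  by rewrite ltnn andbC /= andbF.
rewrite ltS_ne //; case: (x =P x0) => [->|/eqP Hn] /=.
  by rewrite andbC.
by [].
Qed.

Lemma pend5 n (kk : 'I_n) (p : pm n) : valid kk p ->
  pend kk.+1 p = kk |: pend kk p.
Proof.
case=> V1 _ _; apply/setP => x; rewrite !inE.
case: (x =P kk) => [->|/eqP Hne] /=; first by rewrite ltnSn V1.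
by rewrite ltS_ne.
Qed.

Lemma card_tgt n k (p : pm n) : valid k p -> #|tgt k p| = #|pend k p|.
Proof.
case=> V1 V2 V3.
pose A := [set x : 'I_n | (x < k)%N].
pose dom := [set x : 'I_n | p x != None].
pose rng := [set y : 'I_n | [exists x, p x == Some y]].
have -> : pend k p = A :\: dom.
  by apply/setP => x; rewrite !inE negbK andbC.
have -> : tgt k p = A :\: rng.
  apply/setP => y; rewrite !inE negb_exists andbC; congr (_ && _).
rewrite !cardsD.
have -> : A :&: dom = dom.
  apply/setIidPr/subsetP => x; rewrite !inE; case Hx: (p x) => //= _.
  by rewrite ltnNge; apply/negP => /V1; rewrite Hx.
have -> : A :&: rng = rng.
  apply/setIidPr/subsetP => y; rewrite /rng /A !inE => /existsP[x /eqP]; exact: V2.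
suff -> : #|rng| = #|dom| by [].
pose f x := odflt x (p x).
have -> : rng = f @: dom.
  apply/setP => y; rewrite inE; apply/existsP/imsetP => [[x /eqP Hx]|[x]].
    by exists x; rewrite ?inE /f Hx.
  move=> Hx ->; exists x; move: Hx; rewrite inE /f; by case: (p x).
rewrite card_in_imset // => x1 x2; rewrite !inE /f.
by case H1: (p x1) => [y1|] //; case H2: (p x2) => [y2|] //= _ _ E; apply: (V3 _ _ y1); rewrite // H2 E.
Qed.

Definition hc n (c : nat) (w : 'S_n) : nat := (\sum_(x : 'I_n) ((x < c) && (c <= w x) : nat))%N.
Definition rest n (k : nat) (w : 'S_n) : nat := (\sum_(k.+1 <= c < n.+1) hc c w)%N.
Definition G n (k : nat) (p : pm n) : {poly int} := \sum_(w : 'S_n | compat k p w) 'X^(rest k w).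

Lemma hc_pend n c (p : pm n) w : valid c p -> compat c p w -> hc c w = #|pend c p|.
Proof.
case=> V1 V2 V3 /forallP C.
rewrite -sum1_card big_mkcond /=; apply: eq_bigr => x _; rewrite inE.
case Hx: (x < c)%N => //=; move: (C x); rewrite Hx /= /cx.
case Hp: (p x) => [y|] /=; last by move ->.
by move/eqP => ->; rewrite leqNgt (V2 _ _ Hp).
Qed.

Lemma G_base n (p : pm n) : valid n p -> G n p = (#|pend n p| == 0%N)%:R.
Proof.
case=> V1 V2 V3.
have -> : G n p = (#|[pred w : 'S_n | compat n p w]|)%:R.
  rewrite /G (eq_bigr (fun _ => 1)) => [|w _]; last by rewrite /rest big_geq.
  by rewrite sumr_const.
case: (set_0Vmem (pend n p)) => [P0|[x Hx]].
  rewrite P0 cards0 eqxx.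
  have Hs : forall x, p x != None.
    move=> x; apply/negP => /eqP Hx.
    have : x \in pend n p by rewrite inE ltn_ord Hx eqxx.
    by rewrite P0 inE.
  pose f x := odflt x (p x).
  have finj : injective f.
    move=> x1 x2; rewrite /f; move: (Hs x1) (Hs x2).
    case H1: (p x1) => [y1|] //; case H2 : (p x2) => [y2|] //= _ _ E.
    by apply: (V3 _ _ y1) => //; rewrite H2 E.
  rewrite (@eq_card _ _ (pred1 (perm finj))) ?card1 // => w /=.
  rewrite !inE; apply/forallP/eqP => [H|->].
    apply/permP => x; rewrite permE /f; move: (H x); rewrite ltn_ord /= /cx.
    case Hp: (p x) => [y|]; [by move/eqP | by move: (Hs x); rewrite Hp].
  move=> x; rewrite ltn_ord /= /cx permE /f; case Hp: (p x) => [y|] //=.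
  by move: (Hs x); rewrite Hp.
rewrite (_ : (#|pend n p| == 0%N) = false); last first.
  by apply/negbTE; rewrite cards_eq0; apply/set0Pn; exists x.
rewrite eq_card0 // => w; rewrite !inE; apply/negbTE/negP => /forallP/(_ x).
by move: Hx; rewrite inE => /andP[Hxn /eqP Hp]; rewrite Hxn /= /cx Hp leqNgt ltn_ord.
Qed.

Lemma sum_eq1 (T : finType) (A : {set T}) (a : T) (b : bool) :
  (\sum_(y in A) ((a == y) && b : nat) = (a \in A) && b)%N.
Proof.
case Ha: (a \in A).
  rewrite (bigD1 a) //= eqxx big1 ?addn0 // => y /andP[_ Hy].
  by rewrite eq_sym (negbTE Hy).
rewrite big1 // => y Hy; case: eqP => // Hay.
by rewrite -Hay Ha in Hy.
Qed.

Lemma ext_compat n (kk : 'I_n) (p p' : pm n) (w : 'S_n) :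
  (forall x : 'I_n, (x < kk)%N -> p' x = p x \/ (p x = None /\ p' x = Some kk)) ->
  compat kk.+1 p' w -> compat kk p w.
Proof.
move=> H /forallP C'; apply/forallP => x; apply/implyP => Hx.
move: (C' x); rewrite ltnS (ltnW Hx) /= /cx; case: (H x Hx) => [->|[-> ->]].
  by case: (p x) => // /ltnW.
by move/eqP => ->.
Qed.

Lemma ext_false n (kk : 'I_n) (p p' : pm n) (w : 'S_n) :
  (forall x : 'I_n, (x < kk)%N -> p' x = p x \/ (p x = None /\ p' x = Some kk)) ->
  compat kk p w = false -> compat kk.+1 p' w = false.
Proof. by move=> H C; apply/negbTE/negP => /(ext_compat H); rewrite C. Qed.

Lemma count_id n (kk : 'I_n) (p : pm n) (w : 'S_n) : valid kk p ->
  (compat kk p w : nat) =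
  (compat kk.+1 (upd p kk kk) w + \sum_(y in tgt kk p) compat kk.+1 (upd p kk y) w
   + \sum_(x in pend kk p) compat kk.+1 (upd p x kk) w
   + \sum_(x in pend kk p) \sum_(y in tgt kk p) compat kk.+1 (upd (upd p x kk) kk y) w
   + compat kk.+1 p w)%N.
Proof.
move=> V; case C: (compat kk p w); last first.
  have Hl : forall b (x : 'I_n), (x < kk)%N -> upd p kk b x = p x \/ (p x = None /\ upd p kk b x = Some kk).
    by move=> b x Hx; left; apply: upd_lt.
  have H3 : forall x0, x0 \in pend kk p -> forall x : 'I_n, (x < kk)%N ->
      upd p x0 kk x = p x \/ (p x = None /\ upd p x0 kk x = Some kk).
    move=> x0 Hx0 x Hx; rewrite /upd; case: (x =P x0) => [->|]; last by left.
    by right; move: Hx0; rewrite inE => /andP[_ /eqP].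
  rewrite (ext_false (Hl kk) C) big1 => [|y _]; last by rewrite (ext_false (Hl y) C).
  rewrite big1 => [|x Hx]; last by rewrite (ext_false (H3 x Hx) C).
  rewrite big1 => [|x Hx]; last first.
    rewrite big1 // => y _; rewrite (@ext_false _ _ p) // => x1 Hx1.
    by rewrite upd_lt //; apply: H3.
  by rewrite (@ext_false _ _ p p) //; move=> x _; left.
set e := ((w^-1)%g kk \in pend kk p).
rewrite c1 // c5 //.
have S2 : (\sum_(y in tgt kk p) compat kk.+1 (upd p kk y) w = (w kk \in tgt kk p) && ~~ e)%N.
  by rewrite -sum_eq1; apply: eq_bigr => y _; rewrite c2.
have S3 : (\sum_(x in pend kk p) compat kk.+1 (upd p x kk) w = e && (kk < w kk)%N)%N.
  by rewrite -sum_eq1; apply: eq_bigr => x Hx; rewrite c3.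
have S4 : (\sum_(x in pend kk p) \sum_(y in tgt kk p) compat kk.+1 (upd (upd p x kk) kk y) w
   = e && (w kk \in tgt kk p))%N.
  rewrite -sum_eq1; apply: eq_bigr => x Hx.
  transitivity ((w kk \in tgt kk p) && ((w^-1)%g kk == x) : nat); last by rewrite andbC.
  by rewrite -sum_eq1; apply: eq_bigr => y _; rewrite c4 // andbC.
rewrite S2 S3 S4.
have Hq : (w kk \in tgt kk p) = (w kk < kk)%N.
  rewrite inE; apply/andP/idP => [[]//|Hlt]; split => //; apply/forallP => x.
  apply/negP => /eqP Hp; case: V => V1 _ _.
  have Hx : (x < kk)%N by rewrite ltnNge; apply/negP => /V1; rewrite Hp.
  move/forallP: C => /(_ x); rewrite Hx /= /cx Hp => /eqP /perm_inj Hxk.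
  by rewrite Hxk ltnn in Hx.
have He : e -> (w kk == kk) = false.
  rewrite /e permE1 => Hin; apply/negbTE/negP => /eqP Hk.
  by move: Hin; rewrite -Hk inE ltnn.
rewrite -/e; clear S2 S3 S4; clearbody e.
have Hwk : (w kk == kk :> 'I_n) = (nat_of_ord (w kk) == nat_of_ord kk :> nat) by [].
rewrite Hq; move: He; case: e => He.
  have Hf := He isT; rewrite He //=; move: Hf; rewrite Hwk; by case: ltngtP.
by rewrite Hwk /= !andbT; case: ltngtP.
Qed.

Lemma G_step n (kk : 'I_n) (p' : pm n) : valid kk.+1 p' ->
  \sum_(w : 'S_n) (compat kk.+1 p' w)%:R * 'X^(rest kk w)
  = 'X^(#|pend kk.+1 p'|) * G kk.+1 p'.
Proof.
move=> V; rewrite /G mulr_sumr [RHS]big_mkcond /=; apply: eq_bigr => w _.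
case Cw: (compat kk.+1 p' w); last by rewrite mul0r.
rewrite mul1r /rest big_ltn ?ltnS ?ltn_ord // exprD (hc_pend V Cw) //.
Qed.

Definition Ssum n (kk : 'I_n) (Z : 'S_n -> {poly int}) (p' : pm n) : {poly int} :=
  \sum_(w : 'S_n) (compat kk.+1 p' w)%:R * Z w.

Lemma split_sum n (kk : 'I_n) (p : pm n) (Z : 'S_n -> {poly int}) : valid kk p ->
  \sum_(w : 'S_n) (compat kk p w)%:R * Z w =
  Ssum kk Z (upd p kk kk) + \sum_(y in tgt kk p) Ssum kk Z (upd p kk y)
   + \sum_(x in pend kk p) Ssum kk Z (upd p x kk)
   + \sum_(x in pend kk p) \sum_(y in tgt kk p) Ssum kk Z (upd (upd p x kk) kk y)
   + Ssum kk Z p.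
Proof.
move=> V; rewrite /Ssum.
have E2 : \sum_(y in tgt kk p) \sum_(w : 'S_n) (compat kk.+1 (upd p kk y) w)%:R * Z w
   = \sum_(w : 'S_n) \sum_(y in tgt kk p) (compat kk.+1 (upd p kk y) w)%:R * Z w.
  exact: exchange_big.
have E3 : \sum_(x in pend kk p) \sum_(w : 'S_n) (compat kk.+1 (upd p x kk) w)%:R * Z w
   = \sum_(w : 'S_n) \sum_(x in pend kk p) (compat kk.+1 (upd p x kk) w)%:R * Z w.
  exact: exchange_big.
have E4 : \sum_(x in pend kk p) \sum_(y in tgt kk p) \sum_(w : 'S_n)
     (compat kk.+1 (upd (upd p x kk) kk y) w)%:R * Z w
   = \sum_(w : 'S_n) \sum_(x in pend kk p) \sum_(y in tgt kk p)
     (compat kk.+1 (upd (upd p x kk) kk y) w)%:R * Z w.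
  transitivity (\sum_(x in pend kk p) \sum_(w : 'S_n) \sum_(y in tgt kk p)
     (compat kk.+1 (upd (upd p x kk) kk y) w)%:R * Z w).
    by apply: eq_bigr => x _; exact: exchange_big.
  exact: exchange_big.
rewrite E2 E3 E4 -!big_split /=; symmetry; apply: eq_bigr => w _.
rewrite (count_id w V) !natrD !mulrDl; congr (_ + _ + _ + _ + _).
- by rewrite natr_sum mulr_suml.
- by rewrite natr_sum mulr_suml.
- by rewrite natr_sum mulr_suml; apply: eq_bigr => x _; rewrite natr_sum mulr_suml.
Qed.

Lemma comb n m : forall k (p : pm n), (k + m = n)%N -> valid k p ->
  G k p = Xu m #|pend k p|.
Proof.
elim: m => [|m IH] k p Hkm V.
  by rewrite addn0 in Hkm; subst k; rewrite G_base.
have Hk : (k < n)%N by lia.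
pose kk := Ordinal Hk.
have Ek : k = nat_of_ord kk by [].
rewrite Ek in V *; clear Ek.
have Hm : (kk.+1 + m = n)%N by rewrite /= -Hkm; lia.
pose Z (w : 'S_n) := 'X^(rest kk w) : {poly int}.
pose S (p' : pm n) := \sum_(w : 'S_n) (compat kk.+1 p' w)%:R * Z w.
have HS : forall p', valid kk.+1 p' -> S p' = 'X^(#|pend kk.+1 p'|) * Xu m #|pend kk.+1 p'|.
  by move=> p' Vp'; rewrite /S /Z G_step // IH.
set P := pend kk p.
set Q := tgt kk p.
have HG : G kk p = S (upd p kk kk) + \sum_(y in Q) S (upd p kk y)
   + \sum_(x in P) S (upd p x kk) + \sum_(x in P) \sum_(y in Q) S (upd (upd p x kk) kk y)
   + S p.
  rewrite /G big_mkcond /=.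
  transitivity (\sum_(w : 'S_n) (compat kk p w)%:R * Z w).
    by apply: eq_bigr => w _; case: (compat kk p w); rewrite ?mul1r ?mul0r.
  exact: split_sum.
have Vm := valid_mono V.
case: (V) => V1 V2 V3.
have kkP : kk \notin P by apply: kk_notin.
have Hp0 : forall x, p x != Some kk by move=> x; apply/eqP => /V2; rewrite ltnn.
have H1 : S (upd p kk kk) = 'X^#|P| * Xu m #|P|.
  rewrite HS ?pend1 //; apply: valid_upd => //; first by rewrite V1.
have H2 : forall y, y \in Q -> S (upd p kk y) = 'X^#|P| * Xu m #|P|.
  move=> y; rewrite inE => /andP[Hy /forallP Hy2].
  rewrite HS ?pend1 //; apply: valid_upd => //; first by lia.
  by rewrite V1.
have H3 : forall x, x \in P -> S (upd p x kk) = 'X^#|P| * Xu m #|P|.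
  move=> x Hx; have Hx' := Hx; rewrite inE in Hx'; case/andP: Hx' => Hxk /eqP Hpx.
  have -> : #|P| = #|pend kk.+1 (upd p x kk)|.
    rewrite pend3 // cardsU1 (cardsD1 x P) Hx inE.
    by rewrite (negbTE kkP) andbF.
  rewrite HS //; apply: valid_upd => //; lia.
have H4 : forall x y, x \in P -> y \in Q ->
    S (upd (upd p x kk) kk y) = 'X^(#|P|.-1) * Xu m #|P|.-1.
  move=> x y Hx; have Hx' := Hx; rewrite inE in Hx'; case/andP: Hx' => Hxk /eqP Hpx.
  rewrite inE => /andP[Hy /forallP Hy2].
  have -> : #|P|.-1 = #|pend kk.+1 (upd (upd p x kk) kk y)|.
    by rewrite pend4 // (cardsD1 x P) Hx.
  have Vx : valid kk.+1 (upd p x kk) by apply: valid_upd => //; lia.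
  rewrite HS //; apply: valid_upd => //; first by lia.
    rewrite /upd; case: (kk =P x) => [E|_]; last by rewrite V1.
    by rewrite -E ltnn in Hxk.
  move=> z; rewrite /upd; case: (z =P x) => _; last exact: Hy2.
  apply/negP => /eqP [E]; by rewrite -E ltnn in Hy.
have H5 : S p = 'X^(#|P|.+1) * Xu m #|P|.+1.
  by rewrite HS // pend5 // cardsU1 kkP.
rewrite HG H1 (eq_bigr _ H2) (eq_bigr _ H3) sumr_const sumr_const.
rewrite (eq_bigr (fun x => 'X^(#|P|.-1) * Xu m #|P|.-1 *+ #|Q|)); last first.
  by move=> x Hx; rewrite (eq_bigr _ (H4 x ^~ Hx)) sumr_const.
rewrite H5 sumr_const card_tgt // -/P /= /jb /dd !scaler_nat.
move: #|P| => h; move: (Xu m h) (Xu m h.-1) (Xu m h.+1) ('X^h) ('X^(h.-1)) ('X^(h.+1)) => a b c x y z.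
ring.
Qed.

End Comb.

Lemma sum_nat1 j N (B : bool) : (1 <= j < N)%N ->
  (\sum_(1 <= c < N) ((c == j) && B : nat) = B)%N.
Proof.
case/andP=> Hj HjN; rewrite (@big_cat_nat _ _ _ j) //=; last exact: ltnW.
rewrite big1_seq => [|c /andP[_]]; last first.
  by rewrite mem_index_iota => /andP[_ Hc]; rewrite (ltn_eqF Hc).
rewrite big_ltn // eqxx big1_seq => [|c /andP[_]]; first by rewrite addn0.
by rewrite mem_index_iota => /andP[Hc _]; rewrite (gtn_eqF Hc).
Qed.

Lemma cnt a b N : (b < N)%N ->
  (\sum_(1 <= c < N) ((a < c) && (c <= b) : nat) = b - a)%N.
Proof.
elim: b => [|b IH] HbN.
  rewrite big1_seq => [//|c /andP[_]]; rewrite mem_index_iota => /andP[Hc _].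
  by case: c Hc => // c _; rewrite andbF.
transitivity (\sum_(1 <= c < N) (((a < c) && (c <= b) : nat) + ((c == b.+1) && (a < b.+1) : nat)))%N.
  apply: eq_bigr => c _; rewrite (leq_eqVlt c b.+1) ltnS.
  case: (c =P b.+1) => [->|_] /=; last by case: (_ && _).
  by rewrite andbT ltnn andbF.
rewrite big_split /= IH ?(ltnW HbN) // sum_nat1 ?HbN //.
by case: (ltnP a b.+1) => H /=; lia.
Qed.

Lemma dep_rest n (w : 'S_n) : dep w = rest 0 w.
Proof.
rewrite /dep /rest /hc exchange_big /=; apply: eq_bigr => x _.
by rewrite cnt // ltnS ltnW.
Qed.

Theorem mainTheorem4 :
  forall n : nat, exists N0 : nat, forall N : nat, (N0 <= N)%N ->
    jconv N n = \sum_(w : 'S_n) 'X^(dep w) :> {poly int}.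
Proof.
move=> n; exists n => N HN.
rewrite /jconv jtailE add0n XcXu //.
pose p0 : 'I_n -> option 'I_n := fun _ => None.
have V0 : valid 0 p0 by split.
have P0 : #|pend 0 p0| = 0%N by apply/eqP; rewrite cards_eq0; apply/eqP/setP => x; rewrite !inE.
rewrite -P0 -(comb (k := 0) (p := p0)) //.
rewrite /G; apply: eq_big => [w|w _]; last by rewrite dep_rest.
by apply/forallP => x.
Qed.
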